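(* Let $\Gamma\subseteq\Lambda^+$ be reflective, with $S\subseteq\mathbb Z\Gamma$, $E(\Gamma)$ part of a basis of $(\mathbb Z\Gamma)^*$, and $\mathbb Z\Gamma$ $W$-invariant. Then $\langle\delta,\alpha\rangle\ge0$ for all $\delta\in E(\Gamma)$ and all $\alpha\in S$.
   Context: $G$: complex connected reductive group with Borel $B$, maximal torus $T$, weight lattice $\Lambda$, dominant weights $\Lambda^+$, simple roots $S$, Weyl group $W$ (acting on $\Lambda$ and dually), coroots $\alpha^\vee\in\mathrm{Hom}(\Lambda,\mathbb Z)$. A finitely generated $\Gamma\subseteq\Lambda^+$ is normal if $\mathbb Z\Gamma\cap\mathbb Q_{\ge0}\Gamma=\Gamma$. $\Gamma$ is reflective if it is normal and (1) $\mathrm{rk}\,\mathbb Z\Gamma=\mathrm{rk}\,\Lambda$; (2) the set of hyperplanes spanned by the codimension-1 faces of the cone $\mathbb Q_{\ge0}\Gamma$ is $W$-stable; (3) every codimension-1 face of $\mathbb Q_{\ge0}\Gamma$ meets the open positive Weyl chamber. $\Gamma^\vee=\{v\in\mathrm{Hom}_{\mathbb Z}(\mathbb Z\Gamma,\mathbb Q):\langle v,\gamma\rangle\ge0\ \forall\gamma\in\Gamma\}$; $E(\Gamma)$ is the set of primitive elements of $(\mathbb Z\Gamma)^*$ spanning extremal rays of $\Gamma^\vee$. *)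

(* Defs.v *)
(* Weights live in Q^r = 'rV[rat]_r; the weight lattice
   Lambda is Z^r (integral row vectors), Hom(Lambda,Z) is identified with
   Z^r via the standard pairing [dot]. *)
From HB Require Import structures.
From mathcomp Require Import all_boot all_order all_algebra.
Set Implicit Arguments. Unset Strict Implicit. Unset Printing Implicit Defensive.
Import Order.TTheory GRing.Theory Num.Theory.
Local Open Scope ring_scope.

Definition vec (r : nat) := 'rV[rat]_r.

Definition dot (r : nat) (u v : vec r) : rat := \sum_(k < r) u 0 k * v 0 k.

Definition is_intQ (q : rat) : Prop := exists z : int, q = z%:~R.
Definition integral (r : nat) (v : vec r) : Prop := forall k, is_intQ (v 0 k).

Definition refl (r n : nat) (alpha coroot : 'I_n -> vec r) (i : 'I_n) (x : vec r)
  : vec r := x - dot (coroot i) x *: alpha i.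

Definition wact (r n : nat) (alpha coroot : 'I_n -> vec r) (w : seq 'I_n)
  (x : vec r) : vec r := foldr (refl alpha coroot) x w.

Definition reductive_root_datum (r n : nat) (alpha coroot : 'I_n -> vec r) : Prop :=
  [/\ (forall i, integral (alpha i) /\ integral (coroot i)),
      free [seq alpha i | i <- enum 'I_n] /\ free [seq coroot i | i <- enum 'I_n],
      (forall i, dot (coroot i) (alpha i) = 2),
      (forall i j, i != j -> dot (coroot i) (alpha j) <= 0 /\
                   (dot (coroot i) (alpha j) = 0 <-> dot (coroot j) (alpha i) = 0)) &
      (* W finite: every element has a word of bounded length *)
      exists N : nat, forall w : seq 'I_n, exists w' : seq 'I_n,
        (size w' <= N)%N /\ forall x, wact alpha coroot w x = wact alpha coroot w' x].

Definition dominant (r n : nat) (coroot : 'I_n -> vec r) (x : vec r) : Prop :=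
  integral x /\ forall i, 0 <= dot (coroot i) x.

Definition inGamma (r : nat) (gens : seq (vec r)) (x : vec r) : Prop :=
  exists c : 'I_(size gens) -> nat, x = \sum_(k < size gens) (c k)%:R *: gens`_k.
Definition inZGamma (r : nat) (gens : seq (vec r)) (x : vec r) : Prop :=
  exists c : 'I_(size gens) -> int, x = \sum_(k < size gens) (c k)%:~R *: gens`_k.
Definition inCone (r : nat) (gens : seq (vec r)) (x : vec r) : Prop :=
  exists c : 'I_(size gens) -> rat, (forall k, 0 <= c k) /\
    x = \sum_(k < size gens) c k *: gens`_k.

Definition normal_monoid (r : nat) (gens : seq (vec r)) : Prop :=
  forall x, inZGamma gens x -> inCone gens x -> inGamma gens x.

Definition spanP (r : nat) (P : vec r -> Prop) (x : vec r) : Prop :=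
  exists s : seq (vec r), (forall y, y \in s -> P y) /\ x \in <<s>>%VS.
Definition dimP (r : nat) (P : vec r -> Prop) (d : nat) : Prop :=
  (exists s : seq (vec r), (forall y, y \in s -> P y) /\ free s /\ size s = d) /\
  (forall s : seq (vec r), (forall y, y \in s -> P y) -> free s -> (size s <= d)%N).

Definition cone_face (r : nat) (gens : seq (vec r)) (F : vec r -> Prop) : Prop :=
  exists v : vec r, (forall x, inCone gens x -> 0 <= dot v x) /\
    forall x, F x <-> (inCone gens x /\ dot v x = 0).

Definition facet (r : nat) (gens : seq (vec r)) (F : vec r -> Prop) : Prop :=
  cone_face gens F /\ exists d : nat, dimP (inCone gens) d.+1 /\ dimP F d.

Definition reflective (r n : nat) (alpha coroot : 'I_n -> vec r)
  (gens : seq (vec r)) : Prop :=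
  [/\ normal_monoid gens,
      \dim <<gens>>%VS = r,
      (forall (w : seq 'I_n) F, facet gens F -> exists F', facet gens F' /\
         forall x, spanP F' x <-> exists y, spanP F y /\ x = wact alpha coroot w y) &
      (forall F, facet gens F -> exists x, F x /\ forall i, 0 < dot (coroot i) x)].

(* (Z Gamma)^* = Hom(Z Gamma, Z), realised inside Q^r (Z Gamma has full rank) *)
Definition in_dual_lattice (r : nat) (gens : seq (vec r)) (v : vec r) : Prop :=
  forall x, inZGamma gens x -> is_intQ (dot v x).

Definition in_dual_cone (r : nat) (gens : seq (vec r)) (v : vec r) : Prop :=
  forall x, inGamma gens x -> 0 <= dot v x.

Definition primitive_dual (r : nat) (gens : seq (vec r)) (v : vec r) : Prop :=
  in_dual_lattice gens v /\ v != 0 /\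
  forall (u : vec r) (k : nat), in_dual_lattice gens u -> v = k%:R *: u -> k = 1%N.

Definition extremal_ray (r : nat) (gens : seq (vec r)) (v : vec r) : Prop :=
  in_dual_cone gens v /\ v != 0 /\
  forall a b, in_dual_cone gens a -> in_dual_cone gens b -> a + b = v ->
    exists t : rat, 0 <= t /\ a = t *: v.

Definition in_EGamma (r : nat) (gens : seq (vec r)) (v : vec r) : Prop :=
  primitive_dual gens v /\ extremal_ray gens v.

Definition E_part_of_basis (r : nat) (gens : seq (vec r)) : Prop :=
  exists B : seq (vec r),
    [/\ (forall b, b \in B -> in_dual_lattice gens b),
        (forall v, in_dual_lattice gens v -> exists c : 'I_(size B) -> int,
            v = \sum_(k < size B) (c k)%:~R *: B`_k),
        (forall c : 'I_(size B) -> int,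
            \sum_(k < size B) (c k)%:~R *: B`_k = 0 -> forall k, c k = 0) &
        (forall v, in_EGamma gens v -> v \in B)].

(* Main.v *)
Require Import Defs.
From HB Require Import structures.
From mathcomp Require Import all_boot all_order all_algebra.
From mathcomp Require Import lra zify.
Import Order.TTheory GRing.Theory Num.Theory.
Local Open Scope ring_scope.

Section H.
Variable r : nat.
Implicit Types u v x y : vec r.

Lemma dotC u v : dot u v = dot v u.
Proof. by apply: eq_bigr => k _; rewrite mulrC. Qed.

Lemma dotZ u a x : dot u (a *: x) = a * dot u x.
Proof. by rewrite /dot mulr_sumr; apply: eq_bigr => k _; rewrite mxE mulrCA. Qed.

Lemma dotD u x y : dot u (x + y) = dot u x + dot u y.
Proof. by rewrite /dot -big_split; apply: eq_bigr => k _; rewrite mxE mulrDr. Qed.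

Lemma dotN u x : dot u (- x) = - dot u x.
Proof. by rewrite -scaleN1r dotZ mulN1r. Qed.

Lemma dotB u x y : dot u (x - y) = dot u x - dot u y.
Proof. by rewrite dotD dotN. Qed.

Lemma dot_sum u m (F : 'I_m -> vec r) :
  dot u (\sum_(i < m) F i) = \sum_(i < m) dot u (F i).
Proof.
rewrite /dot; under eq_bigr do rewrite summxE mulr_sumr.
exact: exchange_big.
Qed.

Lemma dot0 u : dot u 0 = 0.
Proof. by rewrite -(scale0r 0) dotZ mul0r. Qed.

Lemma dot_self0 v : dot v v = 0 -> v = 0.
Proof.
move=> h; have := h; rewrite /dot => /eqP; rewrite psumr_eq0 => [/allP H|k _].
  apply/matrixP => i k; rewrite ord1 mxE.
  by have := H k (mem_index_enum k) => /= /eqP /eqP; rewrite mulf_eq0 orbb => /eqP.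
by rewrite -expr2 sqr_ge0.
Qed.

Lemma orth_span u s x : (forall y, y \in s -> dot u y = 0) -> x \in <<s>>%VS ->
  dot u x = 0.
Proof.
move=> H xs; rewrite (coord_span (X := in_tuple s) xs) dot_sum big1 // => i _.
by rewrite dotZ H ?mulr0 // mem_nth.
Qed.

Lemma extract_free (s : seq (vec r)) :
  exists s', [/\ {subset s' <= s}, free s' & (<<s'>> = <<s>>)%VS].
Proof.
elim: s => [|x t [t' [sub ft sp]]]; first by exists [::]; split => //; exact: nil_free.
case: (boolP (x \in <<t'>>%VS)) => xt.
  exists t'; split => //; first by move=> y /sub; rewrite inE orbC => ->.
  by rewrite span_cons -sp; apply/esym/addv_idPr; rewrite -span_seq1; apply/span_subvP=> y; rewrite inE => /eqP->.
exists (x :: t'); split.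
- by move=> y; rewrite !inE => /orP [->|/sub ->] //; rewrite orbT.
- by rewrite free_cons xt.
- by rewrite !span_cons sp.
Qed.

Lemma free_le (s : seq (vec r)) : free s -> (size s <= r)%N.
Proof.
move/eqP <-; have := dimvS (subvf <<s>>%VS).
by rewrite dimvf dim_matrix mul1r.
Qed.


Lemma sum_ind (m : nat) (k : 'I_m) (g : 'I_m -> vec r) :
  \sum_(j < m) (j == k)%:R *: g j = g k.
Proof.
rewrite (bigD1 k) //= eqxx scale1r big1 ?addr0 // => j /negPf ->.
by rewrite scale0r.
Qed.

Lemma gens_Gamma (gens : seq (vec r)) (k : 'I_(size gens)) : inGamma gens gens`_k.
Proof. by exists (fun j => nat_of_bool (j == k)); rewrite sum_ind. Qed.

Lemma gens_Cone (gens : seq (vec r)) (k : 'I_(size gens)) : inCone gens gens`_k.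
Proof.
exists (fun j => (j == k)%:R); split; first by move=> j; exact: ler0n.
by rewrite sum_ind.
Qed.

Lemma dual_cone_cone (gens : seq (vec r)) d x :
  in_dual_cone gens d -> inCone gens x -> 0 <= dot d x.
Proof.
move=> hd [c [c0 ->]]; rewrite dot_sum sumr_ge0 // => k _.
by rewrite dotZ mulr_ge0 // hd // ; apply: gens_Gamma.
Qed.

Lemma dual_of_gens (gens : seq (vec r)) a :
  (forall k : 'I_(size gens), 0 <= dot a gens`_k) -> in_dual_cone gens a.
Proof.
move=> h x [c ->]; rewrite dot_sum sumr_ge0 // => k _.
by rewrite dotZ mulr_ge0.
Qed.


Lemma face_dim (gens : seq (vec r)) d :
  extremal_ray gens d ->
  (r <= (\dim <<[seq g <- gens | dot d g == 0%R]>>%VS).+1)%N.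
Proof.
move=> [dc [dn0 ext]]; set G0 := [seq _ <- _ | _].
rewrite leqNgt; apply/negP => hlt.
pose X := vbasis <<G0>>%VS.
pose m := \dim <<G0>>%VS.
pose M : 'M[rat]_(r, m) := \matrix_(j, k) (X`_k) 0 j.
have rK : (1 < \rank (kermx M))%N.
  rewrite mxrank_ker; have := rank_leq_col M; rewrite /m in hlt *; lia.
have : ~~ (kermx M <= d)%MS.
  apply/negP => /mxrankS; have := rank_leq_row d; lia.
case/row_subPn => j hj; set u := row j (kermx M) in hj.
have uM : u *m M = 0 by rewrite /u -row_mul mulmx_ker row0.
have uX : forall k : 'I_m, dot u X`_k = 0.
  move=> k; have := congr1 (fun A : 'rV_m => A 0 k) uM; rewrite !mxE => <-.
  by rewrite /dot; apply: eq_bigr => l _; rewrite !mxE.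
have uG0 : forall g, g \in gens -> dot d g = 0 -> dot u g = 0.
  move=> g gin dg0; apply: (@orth_span u (tval X) g).
    move=> y /(nthP 0) [k kl <-]; rewrite size_tuple in kl.
    exact: (uX (Ordinal kl)).
  rewrite (span_basis (vbasisP _)); apply: memv_span.
  by rewrite mem_filter dg0 eqxx gin.
pose T := \sum_(k < size gens) `|dot u gens`_k| / dot d gens`_k.
have dge : forall k : 'I_(size gens), 0 <= dot d gens`_k.
  by move=> k; apply: dc; apply: gens_Gamma.
have T0 : 0 <= T by apply: sumr_ge0 => k _; rewrite divr_ge0.
pose e := (1 + T)^-1.
have e0 : 0 < e by rewrite invr_gt0; lra.
have key : forall k : 'I_(size gens), e * `|dot u gens`_k| <= dot d gens`_k.
  move=> k; case: (eqVneq (dot d gens`_k) 0) => dk0.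
    by rewrite uG0 ?mem_nth // normr0 mulr0 dk0.
  have dkp : 0 < dot d gens`_k by rewrite lt_def dk0 dge.
  have hT : `|dot u gens`_k| / dot d gens`_k <= T.
    rewrite /T (bigD1 k) //= lerDl sumr_ge0 // => l _.
    by rewrite divr_ge0.
  move: hT; rewrite ler_pdivrMr // => hT.
  rewrite /e mulrC ler_pdivrMr; last lra.
  nra.
have dotl : forall (c : rat) (x y g : vec r), dot (c *: (x + y)) g = c * (dot x g + dot y g).
  by move=> c x y g; rewrite dotC dotZ dotD !(dotC g).
pose a := 2^-1 *: (d + e *: u); pose b := 2^-1 *: (d + (- e) *: u).
have ha : in_dual_cone gens a.
  apply: dual_of_gens => k; rewrite /a dotl (dotC (e *: u)) dotZ (dotC _ u).
  have := key k; have := ler_norm (dot u gens`_k); have := ler_norm (- dot u gens`_k).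
  rewrite normrN; nra.
have hb : in_dual_cone gens b.
  apply: dual_of_gens => k; rewrite /b dotl (dotC (- e *: u)) dotZ (dotC _ u).
  have := key k; have := ler_norm (dot u gens`_k); have := ler_norm (- dot u gens`_k).
  rewrite normrN; nra.
have hab : a + b = d.
  rewrite /a /b -scalerDr addrACA scaleNr subrr addr0 -mulr2n -scaler_nat scalerA.
  by rewrite mulVf ?scale1r.
case: (ext a b ha hb hab) => t [_ ht].
have h2 : d + e *: u = (2 * t) *: d.
  have : (2:rat) *: a = (2:rat) *: (t *: d) by rewrite ht.
  by rewrite /a !scalerA mulfV ?scale1r.
have h3 : e *: u = (2 * t - 1) *: d.
  by rewrite scalerBl scale1r -h2 addrAC subrr add0r.
move/negP: hj; apply. apply/sub_rVP; exists (e^-1 * (2 * t - 1)).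
by rewrite -scalerA -h3 scalerA mulVf ?scale1r // gt_eqF.
Qed.

End H.
Theorem mainTheorem17 (r n : nat) (alpha coroot : 'I_n -> vec r)
  (gens : seq (vec r)) :
  reductive_root_datum alpha coroot ->
  (forall g, g \in gens -> dominant coroot g) ->
  reflective alpha coroot gens ->
  (forall i, inZGamma gens (alpha i)) ->
  E_part_of_basis gens ->
  (forall (w : seq 'I_n) x, inZGamma gens x -> inZGamma gens (wact alpha coroot w x)) ->
  forall delta, in_EGamma gens delta -> forall i, 0 <= dot delta (alpha i).
Proof.
move=> RD _ [_ hdim Wst chamber] _ _ _ delta [_ hext] i.
have fd := @face_dim r gens delta hext.
case: hext => [dc [dn0 ext]].
rewrite leNgt; apply/negP => hneg.
case: RD => _ _ h2 _ _.
have rpos : (0 < r)%N.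
  rewrite lt0n; apply/negP => /eqP r0; move: dn0; clear -r0.
  move: delta; rewrite r0 => delta /negP; apply; apply/eqP/matrixP => a [] //.
pose F := fun x => inCone gens x /\ dot delta x = 0.
have Fupper : forall s, (forall y, y \in s -> F y) -> free s -> (size s <= r.-1)%N.
  move=> s Fs fs; rewrite leqNgt; apply/negP => hgt.
  have := free_le _ _ fs => hle.
  have : (<<s>> == fullv)%VS.
    rewrite eqEdim subvf dimvf dim_matrix mul1r (eqP fs) /=; exact: leq_trans (leqSpred r) hgt.
  move/eqP => hs.
  have : dot delta delta = 0.
    apply: (@orth_span _ delta s) => [y /Fs [] //|]; by rewrite hs memvf.
  by move/(dot_self0 _) => h0; move: dn0; rewrite h0 eqxx.
have Ffacet : facet gens F.
  split.
    exists delta; split => // x; exact: dual_cone_cone _ _ _ _ dc.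
  exists r.-1; split.
    rewrite prednK //; split.
      have [s' [sub fs sp]] := extract_free _ gens.
      exists s'; split => [y /sub yin|]; last split => //.
        by case/(nthP 0): yin => k kl <-; apply: (gens_Cone _ _ (Ordinal kl)).
      by rewrite -(eqP fs) sp hdim.
    by move=> s _ fs; apply: free_le _ _ fs.
  split => //.
  set G0 := [seq g <- gens | dot delta g == 0%R] in fd *.
  have [s' [sub fs sp]] := extract_free _ G0.
  have Fs' : forall y, y \in s' -> F y.
    move=> y /sub; rewrite mem_filter => /andP [/eqP dy yin]; split => //.
    by case/(nthP 0): yin => k kl <-; apply: (gens_Cone _ _ (Ordinal kl)).
  exists s'; split => //; split => //.
  have := Fupper _ Fs' fs; rewrite -(eqP fs) sp in fd *; lia.
have [F' [fF' hsp]] := Wst [:: i] F Ffacet.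
have [y [F'y ypos]] := chamber F' fF'.
have ycone : inCone gens y.
  by case: fF' => [[v [_ hv]] _]; case/hv: F'y.
have : spanP F' y.
  exists [:: y]; split; last by apply: memv_span; rewrite mem_head.
  by move=> y0; rewrite inE => /eqP ->.
case/hsp => z [[s [Fs zs]] yz].
have dz : dot delta z = 0.
  by apply: (@orth_span _ delta s) => // y0 /Fs [].
move: yz; rewrite /wact /= /refl => yz.
have hy := ypos i.
have hd := dual_cone_cone _ _ _ _ dc ycone.
move: hy hd; rewrite yz dotB dotZ dotB dotZ h2 dz.
nra.
Qed.
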